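(* Let $\mathcal{D}=(X,\mathcal{B})$ be a $(v,k,\lambda)$ symmetric design of order $q=k-\lambda\geq 2$. Then there exists a semi-resolving set for the points of $\mathcal{D}$ of size $\left\lceil \frac{v\log v}{k-\lambda}\right\rceil$, i.e. a set $S_\mathcal{B}\subseteq\mathcal{B}$ of this size such that for every pair of distinct points $x,y\in X$ some block $B\in S_\mathcal{B}$ satisfies $d(x,B)\neq d(y,B)$ in the incidence graph of $\mathcal{D}$ (equivalently, $B$ contains exactly one of $x,y$).
   Context: A symmetric design with parameters $(v,k,\lambda)$ is a pair $(X,\mathcal{B})$ where $X$ is a set of $v$ points and $\mathcal{B}$ is a family of $k$-subsets of $X$ (blocks) such that any two distinct points lie in exactly $\lambda$ blocks and any two distinct blocks meet in exactly $\lambda$ points. Its order is $q=k-\lambda$. The incidence graph is the bipartite graph on $X\cup\mathcal{B}$ with $x$ adjacent to $B$ iff $x\in B$; $d$ is graph distance. $\log$ denotes the natural logarithm. *)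

(* Defs.v *)
From mathcomp Require Import all_boot.
From Stdlib Require Import Reals.

Set Implicit Arguments.
Unset Strict Implicit.
Unset Printing Implicit Defensive.

Definition symmetric_design (X : finType) (Bs : {set {set X}}) (v k lam : nat) : Prop :=
  [/\ #|X| = v, #|Bs| = v,
      (forall B, B \in Bs -> #|B| = k),
      (forall x y : X, x != y -> #|[set B in Bs | (x \in B) && (y \in B)]| = lam)
    & (forall B C, B \in Bs -> C \in Bs -> B != C -> #|B :&: C| = lam)].

(* Vertices of the incidence graph: points (inl) and sets of points (inr);
   only sets that are blocks get edges. *)
Definition ivertex (X : finType) := (X + {set X})%type.

Definition iadj (X : finType) (Bs : {set {set X}}) (u w : ivertex X) : bool :=
  match u, w with
  | inl x, inr B => (B \in Bs) && (x \in B)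
  | inr B, inl x => (B \in Bs) && (x \in B)
  | _, _ => false
  end.

Fixpoint iwalk (X : finType) (Bs : {set {set X}}) (n : nat) (u w : ivertex X) : bool :=
  match n with
  | 0 => u == w
  | n'.+1 => [exists z, iadj Bs u z && iwalk Bs n' z w]
  end.

(* Graph distance: least n with a walk of length n (any shortest walk has
   length < #|ivertex X|); unreachable pairs get the value #|ivertex X|,
   which plays the role of infinity (it differs from every finite distance). *)
Definition idist (X : finType) (Bs : {set {set X}}) (u w : ivertex X) : nat :=
  find (fun n => iwalk Bs n u w) (iota 0 #|{: ivertex X}|).

Definition semi_resolving_points (X : finType) (Bs S : {set {set X}}) : Prop :=
  S \subset Bs /\
  forall x y : X, x != y ->
    exists2 B, B \in S & idist Bs (inl x) (inr B) <> idist Bs (inl y) (inr B).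

Definition is_ceil (r : R) (n : nat) : Prop := (INR n - 1 < r)%R /\ (r <= INR n)%R.

(* Main.v *)
Require Import Defs.
From mathcomp Require Import all_boot.
From Stdlib Require Import Reals.
From Stdlib Require Import Lra Lia Psatz.
From mathcomp Require Import zify.
Section RealPart.
Local Open Scope R_scope.
Lemma exp_pow_mul (x : R) (n : nat) : exp x ^ n = exp (INR n * x).
Proof.
  elim: n => [|n IH]; first by rewrite /= Rmult_0_l exp_0.
  rewrite -tech_pow_Rmult IH -exp_plus S_INR. f_equal; ring.
Qed.

Lemma exp2_ge7 : 7 <= exp 2.
Proof.
  have H : exp 2 = exp (1/20) ^ 40.
  { rewrite exp_pow_mul. f_equal. simpl. lra. }
  rewrite H.
  have Ha : 21/20 <= exp (1/20) by (generalize (exp_ineq1_le (1/20)); lra).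
  have H5 : (21/20)^5 <= exp (1/20) ^ 5 by (apply pow_incr; lra).
  have Hb : 1.276 <= (21/20)^5 by (simpl; lra).
  have H8 : 1.276 ^ 8 <= (exp (1/20) ^ 5) ^ 8 by (apply pow_incr; lra).
  rewrite -pow_mult in H8. change (Nat.mul 5 8) with 40%nat in H8.
  have : 1.276^8 >= 7 by (simpl; lra).
  lra.
Qed.

Lemma e_ge2 : 2 <= exp 1.
Proof. generalize (exp_ineq1_le 1); lra. Qed.

Lemma poly_le_exp (n : nat) : (2 <= n)%coq_nat -> INR (n*n+n+1) <= exp (INR n).
Proof.
  move=> Hn. induction Hn as [|m Hm IH].
  - simpl. generalize exp2_ge7. replace (1+1) with 2 by lra. lra.
  - rewrite S_INR exp_plus.
    have : INR ((S m)*(S m) + S m + 1) <= 2 * INR (m*m+m+1).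
    { have -> : 2 = INR 2 by simpl; lra.
      rewrite -mult_INR. apply le_INR.
      nia. }
    generalize e_ge2; intro. 
    have : 0 <= INR (m*m+m+1) by apply pos_INR.
    nra.
Qed.

Lemma ln_le_q (v q : nat) : (1 <= v)%nat -> (2 <= q)%nat -> (v <= q*q+q+1)%nat ->
  ln (INR v) <= INR q.
Proof.
  move=> h1 h2 h3.
  have Hv : 0 < INR v by apply lt_0_INR; lia.
  have H : INR v <= exp (INR q).
  { apply Rle_trans with (INR (q*q+q+1)); first by apply le_INR; apply/leP.
    apply poly_le_exp; by apply/leP. }
  apply Rnot_lt_le => Hc.
  have := exp_increasing _ _ Hc. rewrite exp_ln //. lra.
Qed.

Lemma ceil_exists (r : R) : 0 <= r -> exists n, is_ceil r n.
Proof.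
  move=> r0.
  have [m Hm] := INR_unbounded r.
  have ex : exists n, (fun n => if Rle_dec r (INR n) then true else false) n.
  { exists m. case: Rle_dec => //= h. lra. }
  pose n := ex_minn ex.
  case: (ex_minnP ex) => n0 Hn0 Hmin.
  exists n0. move: Hn0. case: Rle_dec => //= h _. split => //.
  case: n0 Hmin h => [|n1] Hmin h.
  - simpl. lra.
  - rewrite S_INR. apply Rnot_le_lt => hc.
    have : (n1.+1 <= n1)%nat.
    { apply: Hmin. case: Rle_dec => //= hh. lra. }
    lia.
Qed.

Lemma final_bound (v q N u : nat) : (1 <= v)%nat -> (1 <= q)%nat -> (2*q <= v)%nat ->
  INR v * ln (INR v) / INR q <= INR N ->
  (v^N * u <= v*(v-1)*(v-2*q)^N)%nat -> u = 0%nat :> nat.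
Proof.
  move=> hv hq h2q hN hu.
  case: u hu => [//|u] hu; exfalso.
  have Vp : 0 < INR v by apply lt_0_INR; lia.
  have Qp : 0 < INR q by apply lt_0_INR; lia.
  have H1 : INR (v ^ N)%nat <= INR (v * (v - 1) * (v - 2 * q) ^ N)%nat.
  { apply le_INR. apply/leP. apply: leq_trans hu. rewrite -{1}(muln1 (v^N)%nat).
    by rewrite leq_mul2l ltn0Sn orbT. }
  rewrite !mult_INR !pow_INR minus_INR in H1; last by apply/leP.
  rewrite minus_INR in H1; last by apply/leP; lia.
  rewrite mult_INR /= in H1.
  set a := 2 * INR q / INR v.
  have Ha0 : 0 <= a by rewrite /a; apply Rmult_le_pos; [lra| left; apply Rinv_0_lt_compat; lra].
  have Ha1 : a <= 1.
  { rewrite /a. have : (2 * INR q <= INR v).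
    { have -> : 2 * INR q = INR (2*q)%nat by rewrite mult_INR /=; ring.
      apply le_INR; lia. }
    move=> h. apply (Rmult_le_reg_r (INR v)) => //. field_simplify; lra. }
  have E : INR v - 2 * INR q = INR v * (1 - a) by rewrite /a; field; lra.
  rewrite E Rpow_mult_distr in H1.
  have VN : 0 < INR v ^ N by apply pow_lt.
  have H2 : 1 <= INR v * (INR v - 1) * (1 - a) ^ N.
  { apply (Rmult_le_reg_l (INR v ^ N)) => //. nra. }
  have H3 : (1 - a) ^ N <= exp (- a * INR N).
  { rewrite Rmult_comm -exp_pow_mul. apply pow_incr. split; first lra.
    have := exp_ineq1_le (-a). lra. }
  have H4 : 2 * ln (INR v) <= a * INR N.
  { rewrite /a. have h : INR v * ln (INR v) <= INR N * INR q.
    { move: hN. rewrite /Rdiv => hN.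
      have := Rmult_le_compat_r (INR q) _ _ (Rlt_le _ _ Qp) hN.
      rewrite Rmult_assoc Rinv_l; lra. }
    apply (Rmult_le_reg_r (INR v)) => //. field_simplify; last lra. lra. }
  have H5 : exp (- a * INR N) <= exp (- (2 * ln (INR v))).
  { have [h|h] : - a * INR N < - (2 * ln (INR v)) \/ - a * INR N = - (2 * ln (INR v)) by lra.
    - left; by apply exp_increasing.
    - rewrite h; lra. }
  have E2 : exp (- (2 * ln (INR v))) = / (INR v * INR v).
  { rewrite exp_Ropp -(exp_pow_mul (ln (INR v)) 2) exp_ln //=. f_equal; ring. }
  rewrite E2 in H5.
  have H6 : INR v * (INR v - 1) * (1 - a) ^ N <= INR v * (INR v - 1) * / (INR v * INR v).
  { apply Rmult_le_compat_l; last lra.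
    have : 1 <= INR v by apply (le_INR 1); lia. nra. }
  have : INR v * (INR v - 1) * / (INR v * INR v) < 1.
  { apply (Rmult_lt_reg_r (INR v * INR v)); first nra.
    field_simplify; lra. }
  lra.
Qed.

End RealPart.

Lemma numb (v k lam : nat) : k * (k - 1) = (v - 1) * lam -> 2 * k - lam <= v ->
  2 <= k - lam -> v <= (k - lam) * (k - lam) + (k - lam) + 1.
Proof.
  move=> h1 h2 h3.
  have [q Ek] : exists q, k = q + lam by exists (k - lam); lia.
  have hq : k - lam = q by lia.
  rewrite hq. rewrite hq in h3. rewrite Ek in h1 h2. clear Ek hq.
  have l1 : lam <> 0.
  { move=> l0. rewrite l0 muln0 addn0 in h1. idtac.
    move/eqP: h1; rewrite muln_eq0; lia. }
  have [l Hl] : exists l, lam = l.+1 by exists lam.-1; lia.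
  subst lam.
  have [w Hw] : exists w, v = w.+1 by exists v.-1; lia.
  subst v.
  have [d Hd] : exists d, w = d + 2 * q + l by exists (w - (2 * q + l)); lia.
  subst w.
  have e1 : q + l.+1 - 1 = q + l by lia.
  have e2 : (d + 2 * q + l).+1 - 1 = d + 2 * q + l by lia.
  rewrite e1 e2 in h1.
  have h4 : d * l.+1 + 2 * q = q * q + q.
  { have : (q + l.+1) * (q + l) = q * q + 2 * q * l + l * l + q + l by nia.
    have : (d + 2 * q + l) * l.+1 = d * l.+1 + 2 * q * l + 2 * q + l * l + l by nia.
    lia. }
  have d1 : 1 <= d.
  { rewrite lt0n; apply/eqP => d0. rewrite d0 mul0n add0n in h4. nia. }
  have : l <= d * l by nia.
  nia.
Qed.

Lemma dc (I J : finType) (P : pred I) (Q : pred J) (Rel : I -> J -> bool) :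
  \sum_(i | P i) #|[set j | Q j && Rel i j]| = \sum_(j | Q j) #|[set i | P i && Rel i j]|.
Proof.
  have E1 : forall i, #|[set j | Q j && Rel i j]| = \sum_(j | Q j) (Rel i j : nat).
  { move=> i. rewrite -sum1_card big_mkcond [RHS]big_mkcond /=.
    apply: eq_bigr => j _. rewrite inE. by case: (Q j); case: (Rel i j). }
  have E2 : forall j, #|[set i | P i && Rel i j]| = \sum_(i | P i) (Rel i j : nat).
  { move=> j. rewrite -sum1_card big_mkcond [RHS]big_mkcond /=.
    apply: eq_bigr => i _. rewrite inE. by case: (P i); case: (Rel i j). }
  under eq_bigr do rewrite E1.
  under [RHS]eq_bigr do rewrite E2.
  rewrite (exchange_big_dep Q) //=.
  apply: eq_bigr => j Qj. apply: eq_bigl => i. by rewrite Qj andbT.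
Qed.

Lemma expn_pow (a b : nat) : expn a b = Nat.pow a b.
Proof. elim: b => [//|b IH]. by rewrite expnS IH. Qed.

Lemma extend (T : finType) (A : {set T}) (d : nat) : forall S : {set T},
  S \subset A -> #|S| + d <= #|A| ->
  exists S' : {set T}, [/\ S \subset S', S' \subset A & #|S'| = #|S| + d].
Proof.
  elim: d => [|d IH] S sA cS.
  - exists S. by rewrite addn0.
  - have : 0 < #|A :\: S|.
    { rewrite cardsD. move/setIidPr: sA => ->. lia. }
    case/card_gt0P => a. rewrite inE => /andP [aS aA].
    have sA' : a |: S \subset A by rewrite subUset sub1set aA sA.
    have c1 : #|a |: S| = #|S|.+1 by rewrite cardsU1 aS.
    have [S' [h1 h2 h3]] := IH (a |: S) sA' (ltac:(rewrite c1; lia)).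
    exists S'. split => //.
    + apply: subset_trans h1. exact: subsetUr.
    + rewrite h3 c1. lia.
Qed.

Lemma idist_in (X : finType) (Bs : {set {set X}}) (x : X) (B : {set X}) :
  B \in Bs -> (idist Bs (inl x) (inr B) == 1) = (x \in B).
Proof.
  move=> hB.
  have h1 : iwalk Bs 1 (inl x) (inr B) = (x \in B).
  { rewrite /=. apply/existsP/idP.
    - case=> z /andP [hz /eqP ez]. move: hz. rewrite ez /= hB. done.
    - move=> xB. exists (inr B). by rewrite /= hB xB eqxx. }
  have cn : 2 <= #|{: ivertex X}|.
  { rewrite card_sum. have : 0 < #|X| by apply/card_gt0P; exists x.
    have : 0 < #|{: {set X}}| by apply/card_gt0P; exists B.
    move=> h2 h3. exact: (leq_add h3 h2). }
  rewrite /idist. move: cn. case: #|{: ivertex X}| => [//|[//|n]] _.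
  have -> : iota 0 n.+2 = 0 :: 1 :: iota 2 n by [].
  rewrite [find _ _]/find h1. have -> : iwalk Bs 0 (inl x) (inr B) = false by []. by case: (x \in B).
Qed.

Section Design.
Variables (X : finType) (Bs : {set {set X}}) (v k lam : nat).
Hypothesis D : symmetric_design Bs v k lam.
Hypothesis Hq : 2 <= k - lam.

Definition rr (x : X) := #|[set B in Bs | x \in B]|.

Lemma step1 (x : X) : rr x * (k - 1) = (v - 1) * lam.
Proof.
  case: D => hX hBs hk hlam hint.
  have := @dc _ _ (fun y => y != x) (fun B => B \in Bs)
             (fun y B => (x \in B) && (y \in B)).
  have -> : \sum_(y | y != x) #|[set B | (B \in Bs) && ((x \in B) && (y \in B))]|
            = \sum_(y | y != x) lam.
  { apply: eq_bigr => y hy. apply: hlam. by rewrite eq_sym. }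
  rewrite sum_nat_const cardC1 hX => E. rewrite [(v - 1)]subn1 E.
  rewrite big_mkcond /= /rr.
  rewrite -sum1_card big_distrl /= big_mkcond /=.
  apply: eq_bigr => B _. rewrite inE.
  case HB: (B \in Bs) => //=; case xB: (x \in B) => /=.
  - rewrite mul1n -(hk B HB) (cardsD1 x B) xB add1n /=.
    rewrite subn1 /=. apply: eq_card => y. by rewrite !inE.
  - apply/esym/eqP. rewrite cards_eq0. apply/eqP/setP => y.
    by rewrite !inE andbF.
Qed.

Lemma step2 : \sum_(x : X) rr x = v * k.
Proof.
  case: D => hX hBs hk hlam hint.
  have := @dc _ _ xpredT (fun B => B \in Bs) (fun x B => x \in B).
  rewrite /rr.
  move=> ->.
  rewrite -hBs -sum_nat_const. apply: eq_bigr => B HB.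
  rewrite -(hk B HB). apply: eq_card => y. by rewrite inE.
Qed.

Lemma repl (x : X) : rr x = k.
Proof.
  have k1 : 0 < k - 1 by lia.
  have Ey : forall y, rr y = rr x.
  { move=> y. apply/eqP. rewrite -(eqn_pmul2r k1). by rewrite !step1. }
  have := step2. under eq_bigr do rewrite Ey.
  rewrite sum_nat_const.
  case: D => hX _ _ _ _. rewrite [#|_|](_ : _ = v); last by rewrite -hX; apply: eq_card. move=> /eqP.
  rewrite eqn_mul2l => /orP [/eqP v0|/eqP //].
  have : 0 < #|X| by apply/card_gt0P; exists x.
  lia.
Qed.

Lemma sepcard (x y : X) : x != y ->
  #|[set B in Bs | (x \in B) != (y \in B)]| = 2 * (k - lam).
Proof.
  move=> xy. case: D => hX hBs hk hlam hint.
  set A := [set B in Bs | x \in B]. set C := [set B in Bs | y \in B].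
  have cA : #|A| = k := repl x. have cC : #|C| = k := repl y.
  have cI : #|A :&: C| = lam.
  { rewrite -(hlam x y xy). apply: eq_card => B. rewrite !inE.
    by case: (B \in Bs); case: (x \in B); case: (y \in B). }
  have E : [set B in Bs | (x \in B) != (y \in B)] = (A :\: C) :|: (C :\: A).
  { apply/setP => B. rewrite !inE.
    by case: (B \in Bs); case: (x \in B); case: (y \in B). }
  rewrite E cardsU.
  have -> : (A :\: C) :&: (C :\: A) = set0.
  { apply/setP => B. rewrite !inE.
    by case: (B \in Bs); case: (x \in B); case: (y \in B). }
  rewrite cards0 subn0.
  have h1 := cardsID C A. have h2 := cardsID A C.
  rewrite setIC in h2. lia.
Qed.

Lemma vbound (x y : X) : x != y -> 2 * k - lam <= v.
Proof.
  move=> xy. case: D => hX hBs hk hlam hint.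
  set A := [set B in Bs | x \in B]. set C := [set B in Bs | y \in B].
  have cA : #|A| = k := repl x. have cC : #|C| = k := repl y.
  have cI : #|A :&: C| = lam.
  { rewrite -(hlam x y xy). apply: eq_card => B. rewrite !inE.
    by case: (B \in Bs); case: (x \in B); case: (y \in B). }
  have : #|A :|: C| <= #|Bs|.
  { apply: subset_leq_card. apply/subsetP => B. rewrite !inE.
    by case: (B \in Bs). }
  rewrite cardsU. lia.
Qed.

Lemma kk1 (x : X) : k * (k - 1) = (v - 1) * lam.
Proof. by rewrite -(step1 x) repl. Qed.

Definition sepB (B : {set X}) (p : X * X) := (p.1 \in B) != (p.2 \in B).

Definition unres (S : {set {set X}}) : {set X * X} :=
  [set p : X * X | (p.1 != p.2) && [forall B in S, ~~ sepB B p]].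

Lemma unres_add (B : {set X}) (S : {set {set X}}) : unres (B |: S) = [set p in unres S | ~~ sepB B p].
Proof.
  apply/setP => p. rewrite !inE.
  case: (p.1 != p.2) => //=.
  apply/forall_inP/andP.
  - move=> h. split; last by apply: h; rewrite !inE eqxx.
    apply/forall_inP => C hC. apply: h. by rewrite !inE hC orbT.
  - case=> /forall_inP h1 h2 C. rewrite !inE => /orP [/eqP -> //|]. exact: h1.
Qed.

Lemma unres_sub (S S' : {set {set X}}) : S \subset S' -> unres S' \subset unres S.
Proof.
  move=> /subsetP sS. apply/subsetP => p. rewrite !inE => /andP [-> /forall_inP h] /=.
  apply/forall_inP => C hC. apply: h. exact: sS.
Qed.

Lemma sum_sep (U : {set X * X}) : (forall p, p \in U -> p.1 != p.2) ->
  \sum_(B in Bs) #|[set p in U | sepB B p]| = 2 * (k - lam) * #|U|.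
Proof.
  move=> hU.
  have := @dc _ _ (fun B => B \in Bs) (fun p => p \in U) (fun B p => sepB B p).
  move=> ->. rewrite mulnC -sum_nat_const.
  apply: eq_bigr => p hp. rewrite -(@sepcard p.1 p.2 (hU p hp)). apply: eq_card => B.
  by rewrite !inE.
Qed.


Lemma card_unres0 : #|unres set0| = v * (v - 1).
Proof.
  case: D => hX _ _ _ _.
  set Dg := [set (x, x) | x : X].
  have cD : #|Dg| = v.
  { rewrite card_imset; last by move=> a b [].
    by rewrite -hX; apply: eq_card. }
  have E : unres set0 = [set: X * X] :\: Dg.
  { apply/setP => p. rewrite !inE. case: p => a b /=.
    have -> : [forall (B | B \in set0), ~~ sepB B (a, b)].
    { apply/forall_inP => B. by rewrite inE. }
    rewrite !andbT. apply/idP/idP.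
    - move=> ab. apply/imsetP => [[c _ [e1 e2]]].
      by rewrite e1 e2 eqxx in ab.
    - move=> h. apply/negP => /eqP ab. rewrite ab in h. case/imsetP: h.
      by exists b. }
  have := cardsID Dg [set: X * X].
  rewrite E setTI cD cardsT card_prod hX. 
  move=> h. by rewrite mulnBr muln1 -h addKn.
Qed.


Lemma greedy (B0 : {set X}) : B0 \in Bs -> forall j, exists S : {set {set X}},
  [/\ S \subset Bs, #|S| <= j &
      expn v j * #|unres S| <= v * (v - 1) * expn (v - 2 * (k - lam)) j].
Proof.
  move=> hB0; elim=> [|j [S [sS cS hS]]].
  - exists set0. split; [by apply: sub0set | by rewrite cards0 |].
    by rewrite !expn0 mul1n card_unres0 muln1.
  - set U := unres S. set c := fun B => #|[set p in U | sepB B p]|.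
    have hU : forall p, p \in U -> p.1 != p.2 by move=> p; rewrite inE => /andP [].
    case: (@arg_maxnP _ B0 (fun B => B \in Bs) c hB0) => Bm hBm hmax.
    have hsum : 2 * (k - lam) * #|U| <= v * c Bm.
    { rewrite -(sum_sep U hU).
      case: D => _ hBs _ _ _. rewrite -hBs -sum_nat_const.
      apply: leq_sum => B hB. exact: hmax. }
    have hsplit : c Bm + #|unres (Bm |: S)| = #|U|.
    { rewrite unres_add -(cardsID [set p | sepB Bm p] U). congr (_ + _).
      - apply: eq_card => p. by rewrite !inE andbC.
      - apply: eq_card => p. by rewrite !inE andbC. }
    exists (Bm |: S). split.
    + by rewrite subUset sub1set hBm sS.
    + rewrite cardsU1 -add1n. apply: leq_add; [exact: leq_b1 | exact: cS].
    + set u' := #|unres (Bm |: S)|. set u := #|U|. move: hsplit hsum hS.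
      rewrite -/u -/u' => hsplit hsum hS.
      set q := k - lam. set M := v * (v - 1).
      have h1 : v * u' <= (v - 2 * q) * u.
      { have e : v * u' + v * c Bm = v * u by rewrite -mulnDr addnC hsplit.
        rewrite mulnBl. lia. }
      have e1 : expn v j.+1 * u' = expn v j * (v * u') by rewrite expnS; lia.
      have e2 : v * (v - 1) * expn (v - 2 * q) j.+1 = (v - 2 * q) * (v * (v - 1) * expn (v - 2 * q) j) by rewrite expnS; lia.
      rewrite e1 e2 -/M.
      apply: (@leq_trans (expn v j * ((v - 2 * q) * u))); first by apply: leq_mul.
      have e3 : expn v j * ((v - 2 * q) * u) = (v - 2 * q) * (expn v j * u) by lia.
      rewrite e3. apply: leq_mul => //.
Qed.

End Design.

Theorem theorem2p5 (X : finType) (Bs : {set {set X}}) (v k lam : nat) :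
  symmetric_design Bs v k lam ->
  (2 <= k - lam)%N ->
  exists S : {set {set X}},
    is_ceil (INR v * ln (INR v) / INR (k - lam))%R #|S| /\
    semi_resolving_points Bs S.
Proof.
  move=> D Hq.
  case: (D) => hX hBs hk hlam hint.
  case: (posnP v) => [v0|vpos].
  - exists set0. rewrite cards0 v0. split.
    + rewrite /is_ceil /=. rewrite Rmult_0_l /Rdiv Rmult_0_l. lra.
    + split; first exact: sub0set.
      move=> x. have : 0 < #|X| by apply/card_gt0P; exists x.
      lia.
  - have [x0 _] : exists x0 : X, true.
    { have : 0 < #|X| by lia. case/card_gt0P => x0 _. by exists x0. }
    have k2 := @kk1 _ _ _ _ _ D Hq x0.
    have v2 : 1 < v.
    { case: (leqP v 1) => // hv1. have : v - 1 = 0 by lia.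
      move=> e. rewrite e mul0n in k2. move/eqP: k2. rewrite muln_eq0. lia. }
    have [x1 [y1 [_ _ xy1]]] : exists x y : X, [/\ x \in X, y \in X & x != y].
    { apply/card_gt1P. by rewrite hX. }
    have [B0 hB0] : exists B0, B0 \in Bs.
    { have : 0 < #|Bs| by lia. case/card_gt0P => B0 h. by exists B0. }
    have hvb := @vbound _ _ _ _ _ D Hq _ _ xy1.
    have hnum := @numb _ _ _ k2 hvb Hq.
    set q := k - lam.
    have q2 : 2 <= q by [].
    have lnq := @ln_le_q _ _ (ltnW v2) q2 hnum.
    have Vp : (0 < INR v)%R by apply lt_0_INR; lia.
    have Qp : (0 < INR q)%R by apply lt_0_INR; lia.
    have ln0 : (0 <= ln (INR v))%R.
    { rewrite -ln_1. have : (1 <= INR v)%R by apply (le_INR 1); lia.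
      case => h; [left; apply ln_increasing => //; lra | rewrite h; lra]. }
    set r := (INR v * ln (INR v) / INR q)%R.
    have r0 : (0 <= r)%R.
    { rewrite /r /Rdiv. apply Rmult_le_pos; [nra | left; by apply Rinv_0_lt_compat]. }
    have rv : (r <= INR v)%R.
    { rewrite /r. apply (Rmult_le_reg_r (INR q)) => //.
      rewrite /Rdiv Rmult_assoc Rinv_l; last lra. nra. }
    have [N [hN1 hN2]] := @ceil_exists _ r0.
    have Nv : N <= v.
    { have : (INR N < INR v + 1)%R by lra.
      rewrite -S_INR => h. apply INR_lt in h. lia. }
    have [S0 [sS0 cS0 hS0]] := @greedy _ _ _ _ _ D Hq _ hB0 N.
    rewrite !expn_pow in hS0.
    have q1 : 1 <= q by lia.
    have h2q : 2 * q <= v by rewrite /q; lia.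
    have u0 := @final_bound _ _ _ _ (ltnW v2) q1 h2q hN2 hS0.
    have [S [sS1 sS2 cS]] := @extend _ _ (N - #|S0|) _ sS0 (ltac:(rewrite hBs; lia)).
    exists S. split.
    + have -> : #|S| = N by rewrite cS; lia. by split.
    + split => // x y xy.
      have : (x, y) \notin unres X S.
      { apply/negP => hin.
        have : (x, y) \in unres X S0 by apply: (subsetP (@unres_sub _ _ _ sS1)).
        move: u0. move/eqP. rewrite cards_eq0 => /eqP ->. by rewrite inE. }
      rewrite inE /= xy /= => /forall_inPn [B hBS].
      rewrite negbK /sepB /= => hsep.
      have hBB : B \in Bs by apply: (subsetP sS2).
      exists B => // he.
      move: hsep. by rewrite -(@idist_in _ _ x _ hBB) -(@idist_in _ _ y _ hBB) he eqxx.
Qed.
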